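(* Fix a positive integer $z$. There is a randomized algorithm that uses only the ordinal profile and makes no distance queries. On every finite metric space $(X,d)$ with $|X|=n$ and every consistent profile, it outputs a set $C\subseteq X$ with $|C|=O(\log n)$ such that, with probability at least $2/3$, $\phi_C(X)\le O(1)\cdot\mathrm{OPT}_{2,z}(X,d)$. The constant in $O(1)$ is independent of $n$ and of the instance.
   Context: Ordinal query model: $(X,d)$ is a finite metric space with $|X|=n$. Every point $x\in X$ reports a ranking $\pi_x$ of all points of $X$ such that $y$ is ranked above $y'$ only if $d(x,y)\le d(x,y')$ (ties broken arbitrarily); the collection is a profile consistent with $d$. An algorithm receives $X$, $k$ and the profile for free. Its only other access to $d$ is by querying exact distances, at a cost of one query each. For $C\subseteq X$, $d(x,C)=\min_{c\in C}d(x,c)$. The $(k,z)$-clustering cost of $C$ is $\phi_C(X)=\left(\sum_{x\in X}d(x,C)^z\right)^{1/z}$, and $\mathrm{OPT}_{k,z}(X,d)=\min_{C\subseteq X,|C|=k}\phi_C(X)$. The output may contain more than $k$ centers (a bicriteria solution), but its cost is compared with the optimum over sets of exactly $k$ centers, here $k=2$. *)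

(* Defs.v *)
From HB Require Import structures.
From mathcomp Require Import all_boot all_order all_algebra all_fingroup.
From mathcomp Require Import reals exp.
Set Implicit Arguments. Unset Strict Implicit. Unset Printing Implicit Defensive.
Import Order.TTheory GRing.Theory Num.Theory.
Local Open Scope ring_scope.

Definition is_metric (R : realType) (n : nat) (d : 'I_n -> 'I_n -> R) : Prop :=
  (forall x y, 0 <= d x y) /\
  (forall x y, d x y = 0 <-> x = y) /\
  (forall x y, d x y = d y x) /\
  (forall x y w, d x w <= d x y + d y w).

(* An ordinal profile: for each point x, a ranking of all points, given as
   the bijection  rank |-> point  (rank 0 = top of x's list). *)
Definition profile (n : nat) := 'I_n -> {perm 'I_n}.

Definition consistent (R : realType) (n : nat) (d : 'I_n -> 'I_n -> R)
  (pi : profile n) : Prop :=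
  forall (x : 'I_n) (i j : 'I_n), (i < j)%N -> d x (pi x i) <= d x (pi x j).

(* d(x,C) = min_{c in C} d(x,c) (for C nonempty; 0 by convention if C = set0). *)
Definition dist_set (R : realType) (n : nat) (d : 'I_n -> 'I_n -> R)
  (x : 'I_n) (C : {set 'I_n}) : R :=
  if [pick c in C] is Some c0 then \big[Order.min/d x c0]_(c in C) d x c else 0.

Definition cost (R : realType) (n : nat) (d : 'I_n -> 'I_n -> R) (z : nat)
  (C : {set 'I_n}) : R :=
  powR (\sum_(x : 'I_n) (dist_set d x C) ^+ z) (z%:R^-1).

Definition OPT (R : realType) (n : nat) (d : 'I_n -> 'I_n -> R) (k z : nat) : R :=
  let dflt := if [pick C : {set 'I_n} | #|C| == k] is Some C0 then cost d z C0 else 0 in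
  \big[Order.min/dflt]_(C : {set 'I_n} | #|C| == k) cost d z C.

Definition is_distr (R : realType) (T : finType) (p : {ffun T -> R}) : Prop :=
  (forall t, 0 <= p t) /\ \sum_t p t = 1.

(* A randomized algorithm that sees only n (i.e. X) and the profile (no distance
   queries): its output is a probability distribution over subsets of X. *)
Definition ordinal_algorithm (R : realType) :=
  forall n : nat, profile n -> {ffun {set 'I_n} -> R}.

(* Main.v *)
Require Import Defs.
From HB Require Import structures.
From mathcomp Require Import all_boot all_order all_algebra all_fingroup.
From mathcomp Require Import reals exp.
From mathcomp Require Import zify ring lra.
Import Order.TTheory GRing.Theory Num.Theory.
Local Open Scope ring_scope.

Set Implicit Arguments.
Unset Strict Implicit.
Unset Printing Implicit Defensive.

Lemma bigmin_le_seq (R : realType) (T : eqType) (idx : R) (s : seq T) (P : pred T)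
  (F : T -> R) (c : T) :
  c \in s -> P c -> \big[Order.min/idx]_(i <- s | P i) F i <= F c.
Proof.
elim: s => [//|x s IH] /=; rewrite in_cons => /orP [/eqP <-|cs] Pc.
  by rewrite big_cons Pc ge_min lexx.
rewrite big_cons; case: (P x); last exact: IH.
by rewrite ge_min (IH cs Pc) orbT.
Qed.

Lemma dist_set_le (R : realType) n (d : 'I_n -> 'I_n -> R) x (C : {set 'I_n}) c :
  c \in C -> dist_set d x C <= d x c.
Proof.
move=> cC; rewrite /dist_set; case: pickP => [c0 _|/(_ c)]; last by rewrite cC.
by apply: bigmin_le_seq => //; rewrite mem_index_enum.
Qed.

Lemma dist_set_ge0 (R : realType) n (d : 'I_n -> 'I_n -> R) x (C : {set 'I_n}) :
  (forall u v, 0 <= d u v) -> 0 <= dist_set d x C.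
Proof.
move=> h; rewrite /dist_set; case: pickP => [c0 _|//].
apply: (big_ind (fun v => 0 <= v)) => // u v hu hv.
by rewrite le_min hu hv.
Qed.

Lemma dist_set2 (R : realType) n (d : 'I_n -> 'I_n -> R) x (a b : 'I_n) :
  dist_set d x [set a; b] = d x a \/ dist_set d x [set a; b] = d x b.
Proof.
rewrite /dist_set; case: pickP => [c0 |/(_ a)]; last by rewrite !inE eqxx.
move=> hc0.
apply: (big_ind (fun v => v = d x a \/ v = d x b)).
- by move: hc0; rewrite !inE => /orP [] /eqP ->; [left|right].
- move=> u v hu hv; rewrite /Order.min; by case: ifP.
- by move=> i; rewrite !inE => /orP [] /eqP ->; [left|right].
Qed.

Lemma powz2 (R : realType) (z : nat) (u v : R) : 0 <= u -> 0 <= v ->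
  (u + v) ^+ z <= 2 ^+ z * (u ^+ z + v ^+ z).
Proof.
move=> hu hv.
wlog huv : u v hu hv / u <= v.
  move=> H; case: (leP u v) => h; first exact: H.
  rewrite addrC [u ^+ z + _]addrC; apply: H => //; exact: ltW.
have -> : 2 ^+ z * (u ^+ z + v ^+ z) = (2 * v) ^+ z + 2 ^+ z * u ^+ z.
  by rewrite exprMn mulrDr addrC.
apply: le_trans (_ : (2 * v) ^+ z <= _); last first.
  rewrite lerDl; apply: mulr_ge0; exact: exprn_ge0.
apply: lerXn2r; rewrite ?nnegrE; [lra|lra|lra].
Qed.

Lemma powz3 (R : realType) (z : nat) (u v w : R) : 0 <= u -> 0 <= v -> 0 <= w ->
  (u + v + w) ^+ z <= 4 ^+ z * (u ^+ z + v ^+ z + w ^+ z).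
Proof.
move=> hu hv hw.
apply: le_trans (powz2 z (addr_ge0 hu hv) hw) _.
have h1 := powz2 z hu hv.
have h2 : (0:R) <= 2 ^+ z by apply: exprn_ge0.
have e4 : (4:R) ^+ z = 2 ^+ z * 2 ^+ z by rewrite -exprMn; congr (_ ^+ _); ring.
rewrite e4 -mulrA ler_wpM2l // mulrDr.
have h3 : w ^+ z <= 2 ^+ z * w ^+ z.
  rewrite ler_peMl ?exprn_ge0 //; apply: exprn_ege1; lra.
have h4 : 0 <= 2 ^+ z * (u ^+ z + v ^+ z) :=
  mulr_ge0 h2 (addr_ge0 (exprn_ge0 z hu) (exprn_ge0 z hv)).
apply: lerD => //; rewrite mulrDr; apply: lerD => //.
Qed.

Definition sig_pt n (pi : profile n) (y j : 'I_n) : 'I_n := pi y (rev_ord j).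
Definition pick_pt n (pi : profile n) (y r : 'I_n) (i : nat) : 'I_n :=
  sig_pt pi y (insubd r (r %% 2 ^ i)%N).
Definition Cset n (pi : profile n) (p : 'I_n * 'I_n) : {set 'I_n} :=
  p.1 |: [set pick_pt pi p.1 p.2 i | i : 'I_(trunc_log 2 n).+1].
Definition Alg (R : realType) : ordinal_algorithm R :=
  fun n pi => [ffun C => \sum_(p : 'I_n * 'I_n | Cset pi p == C) ((n * n)%:R^-1 : R)].
Definition SC (R : realType) n (d : 'I_n -> 'I_n -> R) (z : nat) (C : {set 'I_n}) : R :=
  \sum_x dist_set d x C ^+ z.
Definition Kc (R : realType) (z : nat) : R := 2 ^+ z * (7 + 4 ^+ z * 144).

Lemma sum_ge_term (R : realType) (T : finType) (F : T -> R) x :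
  (forall y, 0 <= F y) -> F x <= \sum_y F y.
Proof.
move=> h; rewrite (bigD1 x) //= lerDl; apply: sumr_ge0 => *; exact: h.
Qed.

Lemma markov (R : realType) (T : finType) (F : T -> R) (t k : nat) :
  (forall y, 0 <= F y) ->
  (k * #|[set x | (k%:R * \sum_y F y < t%:R * F x)%R]| <= t)%N.
Proof.
move=> h; set S := \sum_y F y.
have S0 : 0 <= S by apply: sumr_ge0.
case: (eqVneq S 0) => [SE|Sn0].
  suff -> : #|[set x | k%:R * S < t%:R * F x]| = 0%N by rewrite muln0.
  apply/eqP; rewrite cards_eq0; apply/eqP/setP => x; rewrite !inE SE mulr0.
  have : F x <= 0 by rewrite -SE; apply: sum_ge_term.
  have := h x => h1 h2. apply/negbTE; rewrite -leNgt.
  have -> : F x = 0 by lra.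
  by rewrite mulr0.
have Sp : 0 < S by rewrite lt_def Sn0 S0.
rewrite -(ler_nat R) natrM.
rewrite -(ler_pM2r Sp).
apply: le_trans (_ : \sum_(x in [set x | k%:R * S < t%:R * F x]) t%:R * F x <= _).
  apply: le_trans (_ : (k%:R * S) *+ #|[set x | k%:R * S < t%:R * F x]| <= _).
    rewrite -mulr_natr le_eqVlt; apply/orP; left; apply/eqP; ring.
  rewrite -sumr_const; apply: ler_sum => x; rewrite inE => hx; exact: ltW.
rewrite -mulr_sumr ler_wpM2l //.
rewrite [leRHS](bigID (fun x => x \in [set x | k%:R * S < t%:R * F x])) /= lerDl.
apply: sumr_ge0 => *; exact: h.
Qed.

Lemma card_lt_ord n (t : nat) : (#|[set k : 'I_n | (k < t)%N]| <= t)%N.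
Proof.
pose g (k : 'I_n) : 'I_t.+1 := inord k.
have inj : {in [set k : 'I_n | (k < t)%N] &, injective g}.
  move=> u v; rewrite !inE => hu hv E; apply/val_inj.
  have hu' : (u < t.+1)%N := ltnW hu.
  have hv' : (v < t.+1)%N := ltnW hv.
  have := congr1 (@nat_of_ord _) E; rewrite /g (inordK hu') (inordK hv'); exact.
rewrite -(card_in_imset inj).
apply: leq_trans (_ : #|[set~ (@ord_max t)]| <= t)%N; last by rewrite cardsC1 card_ord.
apply: subset_leq_card; apply/subsetP => w /imsetP [k]; rewrite !inE => hk ->.
apply/eqP => E; have := congr1 (@nat_of_ord _) E; rewrite /g (inordK (ltnW hk)) /= => e.
by move: hk; rewrite e ltnn.
Qed.

Lemma OPT_attained (R : realType) n (d : 'I_n -> 'I_n -> R) z : (2 <= n)%N ->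
  exists a b : 'I_n, a != b /\ OPT d 2 z = cost d z [set a; b].
Proof.
move=> hn; rewrite /OPT.
apply: (big_ind (fun v => exists a b : 'I_n, a != b /\ v = cost d z [set a; b])).
- case: pickP => [C0 /cards2P [a [b [hab ->]]]|H]; first by exists a, b.
  have h0 : (0 < n)%N by lia.
  have h1 : (1 < n)%N by lia.
  have := H [set Ordinal h0; Ordinal h1]; rewrite cards2.
  suff -> : Ordinal h0 != Ordinal h1 by [].
  by apply/eqP => /(congr1 val).
- move=> u v hu hv; rewrite /Order.min; by case: ifP.
- by move=> C /cards2P [a [b [hab ->]]]; exists a, b.
Qed.

Lemma SC_ge0 (R : realType) n (d : 'I_n -> 'I_n -> R) z C :
  (forall u v, 0 <= d u v) -> 0 <= SC d z C.
Proof.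
move=> h; apply: sumr_ge0 => x _; apply: exprn_ge0; exact: dist_set_ge0.
Qed.

Lemma cost_le (R : realType) n (d : 'I_n -> 'I_n -> R) z (C C0 : {set 'I_n}) (K : R) :
  (0 < z)%N -> 1 <= K -> (forall u v, 0 <= d u v) ->
  SC d z C <= K * SC d z C0 -> cost d z C <= K * cost d z C0.
Proof.
move=> hz hK hd hS.
have K0 : 0 <= K by lra.
have s0 := SC_ge0 z C hd; have s1 := SC_ge0 z C0 hd.
change (powR (SC d z C) (z%:R^-1) <= K * powR (SC d z C0) (z%:R^-1)).
have hKz : K <= K ^+ z by apply: ler_eXnr.
have hz0 : (z%:R : R) != 0 by rewrite pnatr_eq0 -lt0n.
apply: le_trans (_ : powR (K ^+ z * SC d z C0) (z%:R^-1) <= _).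
  apply: ge0_ler_powR; rewrite ?nnegrE ?invr_ge0 ?ler0n //.
    by apply: mulr_ge0 => //; apply: exprn_ge0.
  apply: le_trans hS _; apply: ler_wpM2r => //.
rewrite powRM ?exprn_ge0 //.
rewrite -powR_mulrn // -powRrM mulfV // powRr1 //.
Qed.

Lemma cost_bound (R : realType) n (d : 'I_n -> 'I_n -> R) (z : nat)
  (hm : is_metric d) (δ : 'I_n -> R) (e f y g : 'I_n) (F C : {set 'I_n}) :
  (forall x, x \in F -> δ x = d x f) -> (forall x, x \notin F -> δ x = d x e) ->
  (forall x, 0 <= δ x) -> δ y = d y e ->
  n%:R * δ y ^+ z <= 6 * \sum_x δ x ^+ z -> y \in C -> g \in C ->
  #|F|%:R * d f g ^+ z <= 4 ^+ z * 144 * \sum_x δ x ^+ z ->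
  SC d z C <= Kc R z * \sum_x δ x ^+ z.
Proof.
case: hm => [d0 [dE [dsym dtri]]] hF hnF hδ0 hye hy yC gC hg.
set S := \sum_x δ x ^+ z.
pose h x := if x \in F then d f g else d e y.
have h0 : forall x, 0 <= h x by move=> x; rewrite /h; case: ifP.
have step : forall x, dist_set d x C ^+ z <= 2 ^+ z * (δ x ^+ z + h x ^+ z).
  move=> x; apply: le_trans (powz2 z (hδ0 x) (h0 x)).
  apply: lerXn2r; rewrite ?nnegrE ?addr_ge0 ?dist_set_ge0 //.
  rewrite /h; case: ifP => xF.
    apply: le_trans (@dist_set_le _ _ d x C g gC) _; rewrite hF //; exact: dtri.
  apply: le_trans (@dist_set_le _ _ d x C y yC) _; rewrite hnF ?xF //; exact: dtri.
apply: le_trans (ler_sum _ (fun x _ => step x)) _.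
rewrite -mulr_sumr big_split /=.
have hsum : \sum_x h x ^+ z <= d f g ^+ z *+ #|F| + d e y ^+ z *+ n.
  apply: le_trans (_ : \sum_x ((if x \in F then d f g ^+ z else 0) + d e y ^+ z) <= _).
    apply: ler_sum => x _; rewrite /h; case: ifP => _; rewrite ?add0r ?lerDl ?exprn_ge0 //.
  rewrite big_split /= -big_mkcond /= !sumr_const card_ord //.
have hey : d e y ^+ z *+ n <= 6 * S by rewrite dsym -hye -mulr_natl.
have hfg : d f g ^+ z *+ #|F| <= 4 ^+ z * 144 * S by rewrite -mulr_natl.
have S0 : 0 <= S by apply: sumr_ge0 => x _; apply: exprn_ge0.
have p2 : (0:R) <= 2 ^+ z by apply: exprn_ge0.
rewrite /Kc -mulrA ler_wpM2l //.
have -> : (7 + 4 ^+ z * 144) * S = S + 4 ^+ z * 144 * S + 6 * S by ring.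
rewrite -addrA lerD2l; exact: le_trans hsum (lerD hfg hey).
Qed.

Lemma consist_lt (R : realType) n (d : 'I_n -> 'I_n -> R) (pi : profile n) y (u v : 'I_n) :
  consistent d pi -> d y (pi y u) < d y (pi y v) -> (u < v)%N.
Proof.
move=> hc h; rewrite ltnNge; apply/negP; rewrite leq_eqVlt => /orP [/eqP e|lt].
  by move: h; rewrite (val_inj e) ltxx.
by move: h; rewrite ltNge (hc y v u lt).
Qed.

Lemma arith (n q N X Rb : nat) : (Rb <= X.+1 * N -> 12*N < q -> q <= n -> X * q <= n -> 6 * Rb <= n)%N.
Proof.
move=> h1 h2 h3 h4.
have h5 : (X * (12 * N) <= X * q)%N by rewrite leq_mul2l ltnW // orbT.
nia.
Qed.
Lemma rev_lt n (j u : 'I_n) : (rev_ord j < u)%N -> (rev_ord u < j)%N.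
Proof. move: (ltn_ord j) (ltn_ord u); rewrite /=; lia. Qed.

Lemma core' (R : realType) n (d : 'I_n -> 'I_n -> R) (pi : profile n) (z : nat)
  (hz : (0 < z)%N) (hm : is_metric d) (hc : consistent d pi) (δ : 'I_n -> R) (e f y : 'I_n) :
  e != f -> (forall x, δ x <= d x e) -> (forall x, δ x <= d x f) ->
  (forall x, δ x = d x e \/ δ x = d x f) -> δ y = d y e ->
  n%:R * δ y ^+ z <= 6 * \sum_x δ x ^+ z ->
  (6 * #|[set r | (Kc R z * \sum_x δ x ^+ z < SC d z (Cset pi (y, r)))%R]| <= n)%N.
Proof.
move=> hef hδe hδf hδ hye hy.
have hm' := hm; case: hm' => [d0 [dE [dsym dtri]]].
set S := \sum_x δ x ^+ z.
have δ0 : forall x, 0 <= δ x by move=> x; case: (hδ x) => ->.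
have S0 : 0 <= S by apply: sumr_ge0 => x _; apply: exprn_ge0.
pose F := [set x | d x f < d x e].
have hF : forall x, x \in F -> δ x = d x f.
  move=> x; rewrite inE => lt; case: (hδ x) => // h.
  by move: (hδf x); rewrite h leNgt lt.
have hnF : forall x, x \notin F -> δ x = d x e.
  move=> x; rewrite inE -leNgt => le; case: (hδ x) => // h.
  have := hδe x; rewrite h => le2; apply/eqP; rewrite eq_le le2 /=; exact: le.
have fF : f \in F.
  rewrite inE; have -> : d f f = 0 by apply/dE.
  rewrite lt_def d0 andbT; apply/eqP => /dE ef; by rewrite ef eqxx in hef.
have hnn : n = #|'I_n| by rewrite card_ord.
have yC : forall r, y \in Cset pi (y, r) by move=> r; rewrite /Cset /= setU11.
pose M : R := 4 ^+ z * 144.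
have p4 : (0:R) <= 4 ^+ z by apply: exprn_ge0.
case: (leP (#|F|%:R * d y f ^+ z) (M * S)) => hcase.
  suff -> : [set r | Kc R z * S < SC d z (Cset pi (y, r))] = set0 by rewrite cards0.
  apply/setP => r; rewrite !inE; apply/negbTE; rewrite -leNgt.
  apply: (@cost_bound R n d z hm δ e f y y F) => //.
  by rewrite dsym.
pose W := [set x | #|F|%:R * d x f ^+ z <= 48%:R * S].
pose N := [set x | 48%:R * S < #|F|%:R * δ x ^+ z].
have fW : f \in W.
  rewrite inE; have -> : d f f = 0 by apply/dE.
  rewrite expr0n eqn0Ngt hz /= mulr0; apply: mulr_ge0 => //.
pose i := trunc_log 2 #|W|.
pose q := (2 ^ i)%N.
have W0 : (0 < #|W|)%N by rewrite card_gt0; apply/set0Pn; exists f.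
have hq1 : (q <= #|W|)%N by apply: trunc_logP.
have hq2 : (#|W| < 2 * q)%N by rewrite /q -expnS; apply: trunc_log_ltn.
have hWn : (#|W| <= n)%N by have := max_card W; rewrite card_ord.
have hi : (i < (trunc_log 2 n).+1)%N by rewrite ltnS; apply: leq_trunc_log.
have hN : (48 * #|N| <= #|F|)%N by apply: markov => x; apply: exprn_ge0.
have hFWN : (#|F| <= #|W| + #|N|)%N.
  apply: leq_trans (leq_card_setU W N).
  apply: subset_leq_card; apply/subsetP => x xF; rewrite inE.
  case: (boolP (x \in N)) => xN; rewrite ?orbT //.
  rewrite orbF inE -(hF x xF); move: xN; rewrite inE -leNgt //.
have hq0 : (0 < q)%N by rewrite /q expn_gt0.
have h12 : (12 * #|N| < q)%N by lia.
pose sig := sig_pt pi y.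
have sig_inj : injective sig by move=> u v /perm_inj /rev_ord_inj.
pose g r := pick_pt pi y r i.
have key : forall r, g r \notin N -> g r \in W.
  move=> r gN; apply/negPn/negP => gW.
  have gF : g r \notin F by apply/negP => gF; move: gN gW; rewrite !inE -(hF _ gF) -leNgt => ->.
  have hge : #|F|%:R * d (g r) e ^+ z <= 48%:R * S by rewrite -(hnF _ gF) leNgt; move: gN; rewrite inE.
  pose j : 'I_n := insubd r (r %% q)%N.
  have hj : (j : nat) = (r %% q)%N.
    by rewrite /j insubdK //; apply: leq_ltn_trans (leq_mod r q) (ltn_ord r).
  have hjq : (j < q)%N by rewrite hj ltn_pmod.
  have gj : g r = sig j by [].
  have closer : forall w, w \in W -> d y (g r) < d y w.
    move=> w; rewrite inE => hw.
    have s0 : 0 <= d y e + d e (g r) + d w f by rewrite !addr_ge0.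
    suff hs : d y e + d e (g r) + d w f < d y f.
      apply: le_lt_trans (dtri y e (g r)) _.
      have := dtri y w f; lra.
    rewrite ltNge; apply/negP => hle.
    have := powz3 z (d0 y e) (d0 e (g r)) (d0 w f).
    have hp : d y f ^+ z <= (d y e + d e (g r) + d w f) ^+ z.
      by apply: lerXn2r; rewrite ?nnegrE.
    move=> h3; have h4 := le_trans hp h3.
    have hmF : (#|F|%:R : R) <= n%:R by rewrite ler_nat; have := max_card F; rewrite card_ord.
    have F0 : (0:R) <= #|F|%:R by apply: ler0n.
    have a1 : #|F|%:R * d y e ^+ z <= 6 * S.
      apply: le_trans hy; rewrite hye; apply: ler_wpM2r => //; exact: exprn_ge0 _ (d0 y e).
    have a2 : #|F|%:R * d e (g r) ^+ z <= 48%:R * S by rewrite dsym.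
    have a3 : #|F|%:R * d w f ^+ z <= 48%:R * S by [].
    have h5 : #|F|%:R * d y f ^+ z <= 4 ^+ z * (#|F|%:R * d y e ^+ z + #|F|%:R * d e (g r) ^+ z + #|F|%:R * d w f ^+ z).
      have -> : 4 ^+ z * (#|F|%:R * d y e ^+ z + #|F|%:R * d e (g r) ^+ z + #|F|%:R * d w f ^+ z) = #|F|%:R * (4 ^+ z * (d y e ^+ z + d e (g r) ^+ z + d w f ^+ z)) by ring.
      by apply: ler_wpM2l.
    have h6 : 4 ^+ z * (#|F|%:R * d y e ^+ z + #|F|%:R * d e (g r) ^+ z + #|F|%:R * d w f ^+ z) <= 4 ^+ z * (6 * S + 48%:R * S + 48%:R * S).
      by apply: ler_wpM2l => //; apply: lerD (lerD a1 a2) a3.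
    have h7 : 4 ^+ z * (6 * S + 48%:R * S + 48%:R * S) <= M * S.
      by rewrite /M -mulrA ler_wpM2l // -!mulrDl; apply: ler_wpM2r => //; rewrite -!natrD ler_nat.
    have := lt_le_trans hcase (le_trans h5 (le_trans h6 h7)); by rewrite ltxx.
  have Wsub : W \subset sig @: [set k : 'I_n | (k < j)%N].
    apply/subsetP => w wW; apply/imsetP.
    exists (rev_ord ((pi y)^-1 w)%g); last by rewrite /sig /sig_pt rev_ordK permKV.
    rewrite inE.
    have lt := closer w wW; rewrite gj /sig /sig_pt in lt.
    have := consist_lt hc (_ : d y (pi y (rev_ord j)) < d y (pi y ((pi y)^-1 w)%g)).
    rewrite permKV => /(_ lt); exact: rev_lt.
  have := leq_trans (subset_leq_card Wsub) (leq_imset_card _ _).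
  move=> /(leq_trans)/(_ (card_lt_ord n j)) => hWj.
  by have := leq_ltn_trans hWj hjq; rewrite ltnNge hq1.
pose Rb := [set r : 'I_n | g r \in N].
have sub : [set r | Kc R z * S < SC d z (Cset pi (y, r))] \subset Rb.
  apply/subsetP => r; rewrite !inE; apply: contraTT => rN.
  rewrite -leNgt.
  apply: (@cost_bound R n d z hm δ e f y (g r) F) => //.
    rewrite /Cset /= setU1r //; apply/imsetP; exists (Ordinal hi) => //.
  have kr : g r \in W by apply: key; rewrite inE.
  move: kr; rewrite inE dsym => h; apply: le_trans h _.
  rewrite -/S; apply: ler_wpM2r => //.
  apply: le_trans (_ : (144:R) <= _); first by rewrite ler_nat.
  rewrite ler_peMl //; apply: exprn_ege1; by rewrite ler1n.
pose J := sig @^-1: N.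
have cJ : #|J| = #|N| by apply: card_preimset.
pose hmap (r : 'I_n) : 'I_(n %/ q).+1 * 'I_n := (inord (r %/ q), insubd r (r %% q)%N).
have hinj : injective hmap.
  move=> r1 r2 [e1 e2].
  have m1 : (r1 %% q < n)%N by apply: leq_ltn_trans (leq_mod r1 q) (ltn_ord r1).
  have m2 : (r2 %% q < n)%N by apply: leq_ltn_trans (leq_mod r2 q) (ltn_ord r2).
  have d1 : (r1 %/ q < (n %/ q).+1)%N by rewrite ltnS leq_div2r // ltnW.
  have d2 : (r2 %/ q < (n %/ q).+1)%N by rewrite ltnS leq_div2r // ltnW.
  have E1 := congr1 (@nat_of_ord _) e1; rewrite (inordK d1) (inordK d2) in E1.
  have E2 := congr1 (@nat_of_ord _) e2; rewrite !insubdK ?inE // in E2.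
  apply: val_inj => /=; rewrite (divn_eq r1 q) (divn_eq r2 q) E1 E2 //.
have cRb : (#|Rb| <= (n %/ q).+1 * #|N|)%N.
  rewrite -(card_imset _ hinj).
  apply: leq_trans (_ : (#|setX [set: 'I_(n %/ q).+1] J| <= _)%N); last by rewrite cardsX cardsT card_ord cJ.
  apply: subset_leq_card; apply/subsetP => p /imsetP [r]; rewrite inE => rN ->.
  by rewrite in_setX in_setT /= inE.
have hqn : (q <= n)%N by apply: leq_trans hq1 hWn.
have hdiv := leq_divM n q.
apply: leq_trans (_ : 6 * #|Rb| <= n)%N; first by rewrite leq_mul2l subset_leq_card // orbT.
exact: arith cRb h12 hqn hdiv.
Qed.

Lemma card_Cset n (pi : profile n) p : (2 <= n)%N -> (#|Cset pi p| <= 3 * trunc_log 2 n)%N.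
Proof.
move=> hn; rewrite /Cset cardsU1.
have h1 := leq_imset_card (fun i : 'I_(trunc_log 2 n).+1 => pick_pt pi p.1 p.2 i) 'I_(trunc_log 2 n).+1.
rewrite card_ord in h1.
have h2 : (0 < trunc_log 2 n)%N by rewrite trunc_log_gt0.
move: h1 h2; set A := #|_|; set L := trunc_log 2 n; case: (_ \notin _) => /=; lia.
Qed.

Lemma arith2 (n c b : nat) : (c + b = n * n -> 3 * b <= n * n -> 2 * (n * n) <= c * 3)%N.
Proof. lia. Qed.


Lemma arith4 (n Y B : nat) : (6 * Y <= n -> 6 * B <= Y * (6 * n) + n * n -> 3 * B <= n * n)%N.
Proof.
move=> h1 h2; have h3 : (n * (6 * Y) <= n * n)%N by rewrite leq_mul2l h1 orbT.
nia.
Qed.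

Theorem mainTheorem5 (R : realType) (z : nat) (hz : (0 < z)%N) :
  exists (c : nat) (alpha : R) (A : ordinal_algorithm R),
  forall (n : nat), (2 <= n)%N ->
  forall (d : 'I_n -> 'I_n -> R) (pi : profile n),
    is_metric d -> consistent d pi ->
    [/\ is_distr (A n pi),
        (forall C : {set 'I_n}, 0 < A n pi C -> (#|C| <= c * trunc_log 2 n)%N) &
        2 / 3 <= \sum_(C : {set 'I_n} | (C != set0) && (cost d z C <= alpha * OPT d 2 z))
                   A n pi C].
Proof.
exists 3%N, (Kc R z), (@Alg R).
move=> n hn d pi hm hc.
have hm' := hm; case: hm' => [d0 [dE [dsym dtri]]].
have n0 : (0 < n)%N by apply: leq_trans hn.
pose w : R := (n * n)%:R^-1.
have w0 : 0 <= w by rewrite /w invr_ge0 ler0n.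
have hA : forall C, @Alg R n pi C = \sum_(p | Cset pi p == C) w by move=> C; rewrite ffunE.
have Ew : \sum_(p : 'I_n * 'I_n) w = 1.
  rewrite sumr_const card_prod card_ord -mulr_natr /w mulVf //.
  by rewrite pnatr_eq0 muln_eq0 negb_or -!lt0n n0.
split.
- split; first by move=> C; rewrite hA; apply: sumr_ge0.
  under eq_bigr do rewrite hA.
  rewrite -Ew (partition_big (Cset pi) xpredT) //=.
- move=> C; rewrite hA.
  case: (pickP (fun p => Cset pi p == C)) => [p /eqP <- _|H].
    by rewrite card_Cset.
  by rewrite big_pred0 // ltxx.
have [a [b [hab hopt]]] := OPT_attained d z hn.
pose δ x := dist_set d x [set a; b].
set S := \sum_x δ x ^+ z.
have S0 : 0 <= S by apply: sumr_ge0 => x _; apply: exprn_ge0; apply: dist_set_ge0.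
pose K := Kc R z.
have K1 : 1 <= K.
  rewrite /K /Kc; apply: le_trans (_ : 1 * 1 <= _); first by rewrite mul1r.
  apply: ler_pM => //; first by apply: exprn_ege1; rewrite ler1n.
  rewrite -[X in X <= _]add0r lerD //; apply: mulr_ege1; [apply: exprn_ege1|]; by rewrite ler1n.
pose G (C : {set 'I_n}) := (C != set0) && (cost d z C <= K * OPT d 2 z).
have good : forall p, SC d z (Cset pi p) <= K * S -> G (Cset pi p).
  move=> p h; apply/andP; split.
    by apply/set0Pn; exists p.1; rewrite /Cset setU11.
  rewrite hopt; apply: cost_le => //.
have E : \sum_(C | G C) @Alg R n pi C = \sum_(p | G (Cset pi p)) w.
  under eq_bigr do rewrite hA.
  rewrite (partition_big (Cset pi) G) //=.
  apply: eq_bigr => C GC; apply: eq_bigl => p.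
  by case: (eqVneq (Cset pi p) C) => [->|ne]; rewrite ?GC ?andbF.
rewrite -/(G _) E.
pose Bad := [set p : 'I_n * 'I_n | K * S < SC d z (Cset pi p)].
have low : \sum_(p in ~: Bad) w <= \sum_(p | G (Cset pi p)) w.
  rewrite [leRHS]big_mkcond [leLHS]big_mkcond; apply: ler_sum => p _.
  case: (boolP (p \in ~: Bad)) => hp; last by case: ifP => _; rewrite ?w0.
  move: hp; rewrite !inE -leNgt => h; by rewrite good.
apply: le_trans low.
rewrite sumr_const.
pose Ybad := [set y | 6%:R * S < n%:R * δ y ^+ z].
have hY : (6 * #|Ybad| <= n)%N by apply: (markov (F := fun y => δ y ^+ z)) => y; apply: exprn_ge0; apply: dist_set_ge0.
have row : forall y, (6 * #|[set r | (K * S < SC d z (Cset pi (y, r)))%R]| <= if y \in Ybad then 6 * n else n)%N.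
  move=> y; case: ifP => hy.
    by rewrite leq_mul2l; have := max_card [set r | (K * S < SC d z (Cset pi (y, r)))%R]; rewrite card_ord => ->; rewrite orbT.
  have hy' : n%:R * δ y ^+ z <= 6 * S by move: hy; rewrite inE => /negbT; rewrite -leNgt.
  have ha : forall x, δ x <= d x a by move=> x; apply: dist_set_le; rewrite !inE eqxx.
  have hb : forall x, δ x <= d x b by move=> x; apply: dist_set_le; rewrite !inE eqxx orbT.
  have h2 : forall x, δ x = d x a \/ δ x = d x b by move=> x; apply: dist_set2.
  case: (leP (d y a) (d y b)) => hyab.
    apply: (@core' R n d pi z hz hm hc δ a b y hab ha hb h2) => //.
    case: (h2 y) => // e; apply/eqP; rewrite eq_le ha /= e; exact: hyab.
  apply: (@core' R n d pi z hz hm hc δ b a y) => //.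
  - by rewrite eq_sym.
  - by move=> x; case: (h2 x); [right|left].
  case: (h2 y) => // e; apply/eqP; rewrite eq_le hb /= e; exact: ltW hyab.
have cardBad : #|Bad| = (\sum_y #|[set r | (K * S < SC d z (Cset pi (y, r)))%R]|)%N.
  transitivity (\sum_y \sum_r (if (y, r) \in Bad then 1 else 0))%N.
    rewrite pair_bigA -sum1_card big_mkcond /=; apply: eq_bigr => -[y r] _ //.
  apply: eq_bigr => y _; rewrite -sum1_card [RHS]big_mkcond; apply: eq_bigr => r _; by rewrite !inE.
have h6 : (6 * #|Bad| <= #|Ybad| * (6 * n) + n * n)%N.
  rewrite cardBad big_distrr /=.
  apply: leq_trans (_ : \sum_y (if y \in Ybad then 6 * n else n) <= _)%N; first exact: leq_sum.
  apply: leq_trans (_ : \sum_y ((if y \in Ybad then 6 * n else 0) + n) <= _)%N.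
    by apply: leq_sum => y _; case: ifP => _; rewrite ?leq_addr ?add0n.
  rewrite big_split /= -big_mkcond /= !sum_nat_const card_ord.
  by [].
have h3 := arith4 hY h6.
have cc : (#|~: Bad| + #|Bad| = n * n)%N by rewrite addnC cardsC card_prod card_ord.
have hc2 := arith2 cc h3.
have Npos : (0 : R) < (n * n)%:R by rewrite ltr0n muln_gt0 n0.
rewrite -[w *+ _]mulr_natr [w * _]mulrC /w ler_pdivlMr // mulrAC ler_pdivrMr ?ltr0n //.
by rewrite -!natrM ler_nat.
Qed.
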